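(* Let $\mathcal O$ be an order in a definite quaternion algebra $H$ over $\mathbb Q$. Then $e_d=0$ unless $d\equiv0\pmod{\omega(\mathcal O)}$.
   Context: $N$, $\mathrm{tr}$ reduced norm and trace; $\Delta(x)=\mathrm{tr}(x)^2-4N(x)$; $\omega(\mathcal O)=\gcd\{\Delta(x):x\in\mathcal O\}$ (positive). Left $\mathcal O$-ideals: lattices $\mathfrak a$ with $\mathfrak a\otimes\mathbb Z_q=\mathcal O_qx_q$, $x_q\in H_q^\times$, for all $q$; $\mathcal O_r(\mathfrak a)=\{x\in H:\mathfrak ax\subseteq\mathfrak a\}$; classes $[\mathfrak a]$ modulo $\mathfrak a\sim\mathfrak ax$, $x\in H^\times$; height pairing $\langle[\mathfrak a],[\mathfrak b]\rangle=\frac12\#\{x\in H^\times:\mathfrak ax=\mathfrak b\}$, $[\mathfrak a]^\vee=[\mathfrak a]/\langle[\mathfrak a],[\mathfrak a]\rangle$. For $d\ge0$ with $-d\equiv0,1\pmod 4$, $a_d([\mathfrak a])$ is the number of $\mathbb Z$-translation orbits of $\{x\in\mathcal O_r(\mathfrak a):\Delta(x)=-d\}$, $a_d=0$ otherwise; $e_d=\sum_{[\mathfrak a]}a_d([\mathfrak a])[\mathfrak a]^\vee$. *)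

(* Defs.v *)
From HB Require Import structures.
From mathcomp Require Import all_boot all_algebra.
From Stdlib Require Import ClassicalEpsilon.
Set Implicit Arguments. Unset Strict Implicit. Unset Printing Implicit Defensive.
Import GRing.Theory Num.Theory.
Local Open Scope ring_scope.

(** The definite quaternion algebra H = (a,b / Q), a < 0, b < 0, realised on
    Q^4 with basis 1, i, j, k = ij, i^2 = a, j^2 = b, ij = -ji. *)
Definition quat : Type := (rat * rat * rat * rat)%type.

Definition qmk (x0 x1 x2 x3 : rat) : quat := (x0, x1, x2, x3).
Definition c0 (x : quat) : rat := x.1.1.1.
Definition c1 (x : quat) : rat := x.1.1.2.
Definition c2 (x : quat) : rat := x.1.2.
Definition c3 (x : quat) : rat := x.2.

Definition qzero : quat := qmk 0 0 0 0.
Definition qone : quat := qmk 1 0 0 0.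
Definition qadd (x y : quat) : quat :=
  qmk (c0 x + c0 y) (c1 x + c1 y) (c2 x + c2 y) (c3 x + c3 y).
Definition qscale (r : rat) (x : quat) : quat :=
  qmk (r * c0 x) (r * c1 x) (r * c2 x) (r * c3 x).

Definition qmul (a b : rat) (x y : quat) : quat :=
  qmk (c0 x * c0 y + a * c1 x * c1 y + b * c2 x * c2 y - a * b * c3 x * c3 y)
      (c0 x * c1 y + c1 x * c0 y - b * c2 x * c3 y + b * c3 x * c2 y)
      (c0 x * c2 y + c2 x * c0 y + a * c1 x * c3 y - a * c3 x * c1 y)
      (c0 x * c3 y + c3 x * c0 y + c1 x * c2 y - c2 x * c1 y).

Definition qnrd (a b : rat) (x : quat) : rat :=
  c0 x ^+ 2 - a * c1 x ^+ 2 - b * c2 x ^+ 2 + a * b * c3 x ^+ 2.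
Definition qtrd (x : quat) : rat := 2 * c0 x.
Definition qdisc (a b : rat) (x : quat) : rat := qtrd x ^+ 2 - 4 * qnrd a b x.

Definition qunit (a b : rat) (x : quat) : Prop :=
  exists y, qmul a b x y = qone /\ qmul a b y x = qone.

Definition qset := quat -> Prop.

Definition lincomb (r1 r2 r3 r4 : rat) (v1 v2 v3 v4 : quat) : quat :=
  qadd (qadd (qscale r1 v1) (qscale r2 v2)) (qadd (qscale r3 v3) (qscale r4 v4)).

Definition is_lattice (L : qset) : Prop :=
  exists v1 v2 v3 v4 : quat,
    (forall r1 r2 r3 r4 : rat, lincomb r1 r2 r3 r4 v1 v2 v3 v4 = qzero ->
       [/\ r1 = 0, r2 = 0, r3 = 0 & r4 = 0]) /\
    (forall y, L y <-> exists n1 n2 n3 n4 : int,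
       y = lincomb n1%:~R n2%:~R n3%:~R n4%:~R v1 v2 v3 v4).

Definition is_order (a b : rat) (O : qset) : Prop :=
  [/\ is_lattice O, O qone & forall x y, O x -> O y -> O (qmul a b x y)].

(** L (x) Z_(q): localisation of a lattice at the prime q. *)
Definition loc (q : nat) (L : qset) : qset :=
  fun y => exists n : nat, ~~ (q %| n)%N /\ L (qscale n%:R y).

Definition left_ideal (a b : rat) (O A : qset) : Prop :=
  is_lattice A /\
  forall q : nat, prime q -> exists x : quat, qunit a b x /\
    forall y, loc q A y <-> exists z, loc q O z /\ y = qmul a b z x.

Definition right_order (a b : rat) (A : qset) : qset :=
  fun x => forall y, A y -> A (qmul a b y x).

Definition rmulset (a b : rat) (A : qset) (x : quat) : qset :=
  fun y => exists z, A z /\ y = qmul a b z x.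

Definition count_classes (S : qset) (R : quat -> quat -> Prop) (n : nat) : Prop :=
  exists s : seq quat,
    [/\ size s = n,
        (forall x, x \in s -> S x),
        (forall i j : nat, (i < n)%N -> (j < n)%N ->
           R (nth qzero s i) (nth qzero s j) -> i = j) &
        (forall x, S x -> exists2 y, y \in s & R x y)].

(** The number of classes (meaningful when it is finite). *)
Definition nclasses (S : qset) (R : quat -> quat -> Prop) : nat :=
  epsilon (inhabits 0%N) (count_classes S R).

Definition ztransl (x y : quat) : Prop :=
  exists n : int, y = qadd x (qscale n%:~R qone).

Definition a_d (a b : rat) (d : nat) (A : qset) : nat :=
  if (d %% 4 == 0)%N || (d %% 4 == 3)%N then
    nclasses (fun x => right_order a b A x /\ qdisc a b x = - d%:R) ztransl
  else 0%N.

Definition height (a b : rat) (A : qset) : rat :=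
  (nclasses (fun x => qunit a b x /\ forall y, rmulset a b A x y <-> A y) eq)%:R / 2.

(** Coefficient of the class [A] in e_d = sum_[A] a_d([A]) [A]^vee. *)
Definition e_coeff (a b : rat) (d : nat) (A : qset) : rat :=
  (a_d a b d A)%:R / height a b A.

Definition divides_all_disc (a b : rat) (O : qset) (m : nat) : Prop :=
  forall x, O x -> exists k : int, qdisc a b x = m%:R * k%:~R.
Definition is_omega (a b : rat) (O : qset) (w : nat) : Prop :=
  [/\ (0 < w)%N, divides_all_disc a b O w &
      forall m : nat, divides_all_disc a b O m -> (m %| w)%N].

(* Main.v *)
Require Import Defs.
From mathcomp Require Import all_boot all_algebra.
From mathcomp Require Import ring.
From Stdlib Require Import ClassicalEpsilon.
Import GRing.Theory Num.Theory.
Local Open Scope ring_scope.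

Lemma qeq (x y : quat) : c0 x = c0 y -> c1 x = c1 y -> c2 x = c2 y -> c3 x = c3 y -> x = y.
Proof. by case: x => [[[x0 x1] x2] x3]; case: y => [[[y0 y1] y2] y3]; rewrite /c0 /c1 /c2 /c3 /= => -> -> -> ->. Qed.

Lemma qmulA a b u v t : qmul a b (qmul a b u v) t = qmul a b u (qmul a b v t).
Proof. apply: qeq; rewrite /qmul /qmk /c0 /c1 /c2 /c3 /=; ring. Qed.

Lemma qmul1 a b u : qmul a b u qone = u.
Proof. apply: qeq; rewrite /qmul /qmk /qone /c0 /c1 /c2 /c3 /=; ring. Qed.

Lemma qmul1l a b u : qmul a b qone u = u.
Proof. apply: qeq; rewrite /qmul /qmk /qone /c0 /c1 /c2 /c3 /=; ring. Qed.

Lemma qscale1 u : qscale 1 u = u.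
Proof. apply: qeq; rewrite /qscale /qmk /c0 /c1 /c2 /c3 /=; ring. Qed.

Lemma qscale_mul a b r u v : qscale r (qmul a b u v) = qmul a b (qscale r u) v.
Proof. apply: qeq; rewrite /qscale /qmul /qmk /c0 /c1 /c2 /c3 /=; ring. Qed.

Lemma qtrdC a b u v : qtrd (qmul a b u v) = qtrd (qmul a b v u).
Proof. rewrite /qtrd /qmul /qmk /c0 /c1 /c2 /c3 /=; ring. Qed.

Lemma qnrdM a b u v : qnrd a b (qmul a b u v) = qnrd a b u * qnrd a b v.
Proof. rewrite /qnrd /qmul /qmk /c0 /c1 /c2 /c3 /=; ring. Qed.

Lemma qnrd1 a b : qnrd a b qone = 1.
Proof. rewrite /qnrd /qone /qmk /c0 /c1 /c2 /c3 /=; ring. Qed.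

Lemma qdisc_scale a b r u : qdisc a b (qscale r u) = r ^+ 2 * qdisc a b u.
Proof. rewrite /qdisc /qtrd /qnrd /qscale /qmk /c0 /c1 /c2 /c3 /=; ring. Qed.

Lemma disc_conj a b p y x z : qmul a b p y = qone -> qmul a b y p = qone ->
  qmul a b z p = qmul a b p x -> qdisc a b z = qdisc a b x.
Proof.
move=> py yp e.
have ez : z = qmul a b (qmul a b p x) y by rewrite -e qmulA py qmul1.
have ht : qtrd z = qtrd x.
  by rewrite ez qmulA qtrdC qmulA yp qmul1.
have hn : qnrd a b z = qnrd a b x.
  rewrite ez !qnrdM mulrC mulrA -qnrdM.
  by rewrite yp qnrd1 mul1r.
by rewrite /qdisc ht hn.
Qed.

Lemma nclasses_empty (S : qset) R : (forall x, ~ S x) -> nclasses S R = 0%N.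
Proof.
move=> hS.
have hex : exists n, count_classes S R n.
  exists 0%N, [::]; split => //; by move=> x /hS.
have := epsilon_spec (inhabits 0%N) _ hex.
rewrite -/(nclasses S R); case=> s [<- hs _ _].
case: s hs => //= x s hs; exfalso; apply: (hS x); apply: hs; exact: mem_head.
Qed.

Theorem corollary1 (a b : rat) (ha : a < 0) (hb : b < 0) (O : qset)
  (hO : is_order a b O) (w : nat) (hw : is_omega a b O w) (d : nat)
  (hd : ~~ (w %| d)%N) :
  forall A : qset, left_ideal a b O A -> e_coeff a b d A = 0.
Proof.
move=> A [_ hA].
case: hO => _ O1 _.
case: hw => w0 hdiv _.
suff H : forall x, ~ (right_order a b A x /\ qdisc a b x = - d%:R).
  by rewrite /e_coeff /a_d (nclasses_empty _ _ H) if_same mul0r.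
move=> x [xr xd].
have loc_step : forall q, prime q -> exists2 n : nat, ~~ (q %| n)%N & (w %| n ^ 2 * d)%N.
  move=> q pq.
  have [p [[y [py yp]] hp]] := hA q pq.
  have Lp : loc q A p.
    apply/hp; exists qone; split; last by rewrite qmul1l.
    exists 1%N; split; last by rewrite qscale1.
    by rewrite dvdn1; case: eqP pq => // ->.
  have Lpx : loc q A (qmul a b p x).
    case: Lp => m [qm Am]; exists m; split => //.
    by rewrite qscale_mul; apply: xr.
  have [z [[n [qn On]] ez]] := (iffLR (hp _)) Lpx.
  exists n => //.
  have [k hk] := hdiv _ On.
  rewrite qdisc_scale (disc_conj _ _ _ _ _ _ py yp (esym ez)) xd in hk.
  have hk' : ((n ^ 2 * d)%N%:Z)%:~R = ((w%:Z * (- k))%R)%:~R :> rat.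
    rewrite intrM -!pmulrn mulrNz mulrN -hk natrM natrX; ring.
  have /intr_inj hz := hk'.
  have := congr1 absz hz; rewrite abszM abszN /= => ->.
  exact: dvdn_mulr.
case: (posnP d) => [d0|dpos].
  by move: hd; rewrite d0 dvdn0.
move/negP: hd; apply; apply/dvdn_partP => // p.
rewrite mem_primes => /and3P [pp _ _].
have [n qn hn] := loc_step p pp.
have cop : coprime (w`_p) (n ^ 2).
  by rewrite p_part; apply: coprimeXl; apply: coprimeXr; rewrite prime_coprime.
rewrite -(Gauss_dvdr _ cop).
exact: dvdn_trans (dvdn_part _ _) hn.
Qed.
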